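(* Let $n\geq 3$ and let $L^B$ be a blow-up of the Boolean lattice $L\cong\mathbf{2}^n$. Then $G^c(L^B)_{SR}$ is connected and $\operatorname{diam}(G^c(L^B)_{SR})\leq 3$.
   Context: Blow-up: keep $0,1$ of $L=\mathbf{2}^n$ and replace every $x\in L\setminus\{0,1\}$ by a finite nonempty chain $C_x$, ordered by the chain order within $C_x$ and, for $a\in C_x,b\in C_y$, $x\neq y$, by $a\leq b$ iff $x\leq y$ in $L$; $0$ least, $1$ greatest. $Z^*(M)$ is the set of nonzero $a$ with $a\wedge b=0$ for some $b\neq0$; $G^c(M)$ has vertex set $Z^*(M)$, distinct $a,b$ adjacent iff $a\wedge b\neq 0$. In a connected graph, $u$ is maximally distant from $v$ if $d(v,w)\leq d(u,v)$ for all neighbours $w$ of $u$; mutually maximally distant means each is maximally distant from the other. $G_{SR}$ has as vertices those $u$ mutually maximally distant from some $v$, distinct vertices adjacent iff mutually maximally distant in $G$. *)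

(* Defs.v *)
From mathcomp Require Import all_boot.
Set Implicit Arguments. Unset Strict Implicit. Unset Printing Implicit Defensive.

Inductive walk (V : Type) (adj : V -> V -> Prop) : V -> V -> nat -> Prop :=
| walk0 u : walk adj u u 0
| walkS u w v m : adj u w -> walk adj w v m -> walk adj u v m.+1.

Definition is_dist (V : Type) (adj : V -> V -> Prop) (u v : V) (m : nat) : Prop :=
  walk adj u v m /\ forall m', walk adj u v m' -> m <= m'.

Definition mmd (V : Type) (adj : V -> V -> Prop) (u v : V) : Prop :=
  exists m, is_dist adj u v m /\
    (forall w m', adj u w -> is_dist adj v w m' -> m' <= m) /\
    (forall w m', adj v w -> is_dist adj u w m' -> m' <= m).

Definition SR_vertex (V : Type) (vert : V -> Prop) (adj : V -> V -> Prop) (u : V) : Prop :=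
  vert u /\ exists v, vert v /\ mmd adj u v.

Definition SR_adj (V : Type) (vert : V -> Prop) (adj : V -> V -> Prop) (u v : V) : Prop :=
  SR_vertex vert adj u /\ SR_vertex vert adj v /\ u <> v /\ mmd adj u v.

Definition connected_diam_le (V : Type) (vert : V -> Prop) (adj : V -> V -> Prop) (D : nat) : Prop :=
  (exists u, vert u) /\
  forall u v, vert u -> vert v -> exists2 m, m <= D & walk adj u v m.

(* Bot = 0, Top = 1, Mid x i = the i-th element (from the bottom) of the chain C_x;
   k x is the length of the chain C_x (every finite nonempty chain is 'I_(k x)). *)
Inductive blow (n : nat) : Type :=
| Bot : blow n
| Top : blow n
| Mid : {set 'I_n} -> nat -> blow n.
Arguments Bot {n}. Arguments Top {n}.

Definition bvalid n (k : {set 'I_n} -> nat) (a : blow n) : Prop :=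
  match a with
  | Mid x i => [/\ x != set0, x != setT & i < k x]
  | _ => True
  end.

Definition ble n (a b : blow n) : Prop :=
  match a, b with
  | Bot, _ => True
  | _, Top => True
  | Mid x i, Mid y j => (x = y /\ i <= j) \/ (x <> y /\ x \subset y)
  | _, _ => False
  end.

(* a /\ b = 0 in L^B: 0 is the greatest lower bound, i.e. every common lower bound is 0 *)
Definition meet_zero n (k : {set 'I_n} -> nat) (a b : blow n) : Prop :=
  forall c, bvalid k c -> ble c a -> ble c b -> c = Bot.

Definition Zstar n (k : {set 'I_n} -> nat) (a : blow n) : Prop :=
  bvalid k a /\ a <> Bot /\ exists b, bvalid k b /\ b <> Bot /\ meet_zero k a b.

Definition Gc_adj n (k : {set 'I_n} -> nat) (a b : blow n) : Prop :=
  Zstar k a /\ Zstar k b /\ a <> b /\ ~ meet_zero k a b.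

(* Main.v *)
Require Import Defs.
From mathcomp Require Import all_boot.
Set Implicit Arguments. Unset Strict Implicit. Unset Printing Implicit Defensive.

Definition kpos n (k : {set 'I_n} -> nat) :=
  forall x : {set 'I_n}, x != set0 -> x != setT -> 0 < k x.

Lemma ble_refl n (a : blow n) : ble a a.
Proof. by case: a => //= x i; left. Qed.

Lemma ble_Top n (a : blow n) : ble a Top.
Proof. by case: a. Qed.

Lemma ble_Mid_sub n (z x : {set 'I_n}) l i : ble (Mid z l) (Mid x i) -> z \subset x.
Proof. by move=> /= [[-> _]|[_ ->]]. Qed.

Lemma ble_sub n (z x : {set 'I_n}) i : z \subset x -> ble (Mid z 0) (Mid x i).
Proof.
move=> s /=; case: (eqVneq z x) => [->|ne]; first by left.
by right; split=> //; apply/eqP.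
Qed.

Lemma disj_false n (x y : {set 'I_n}) a : a \in x -> a \in y -> x :&: y = set0 -> False.
Proof. move=> ha hb E; have: a \in x :&: y by rewrite inE ha hb.
by rewrite E inE. Qed.

Lemma mz_disj n (k : {set 'I_n} -> nat) x i y j : kpos k -> x != setT ->
  meet_zero k (Mid x i) (Mid y j) <-> x :&: y = set0.
Proof.
move=> hk hx; split.
- move=> H; apply/eqP; apply/negPn/negP => Hne.
  have Hnt : x :&: y != setT.
    apply/negP => /eqP E; apply: (negP hx).
    by rewrite eqEsubset subsetT /= -E subsetIl.
  have Hv : bvalid k (Mid (x :&: y) 0) by split => //; apply: hk.
  by have := H _ Hv (ble_sub _ (subsetIl _ _)) (ble_sub _ (subsetIr _ _)).
- move=> E [||z l] //= [Hz _ _] H1 H2.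
  have s1 := ble_Mid_sub H1; have s2 := ble_Mid_sub H2.
  exfalso; case/set0Pn: Hz => a Ha.
  exact: (disj_false (subsetP s1 _ Ha) (subsetP s2 _ Ha) E).
Qed.

Lemma Zstar_Mid n (k : {set 'I_n} -> nat) a : Zstar k a ->
  exists x i, a = Mid x i /\ bvalid k (Mid x i).
Proof.
case: a => [[_ []]|[_ [_ [b [Hb [Hb0 H]]]]]| x i [Hv _]] //.
- by case: Hb0; apply: H => //; [apply: ble_Top | apply: ble_refl].
- by exists x, i.
Qed.

Lemma validC n (k : {set 'I_n} -> nat) x i : kpos k -> bvalid k (Mid x i) ->
  bvalid k (Mid (~: x) 0).
Proof.
move=> hk [H0 HT _].
have Hc0 : ~: x != set0.
  apply: contra HT => /eqP E; by rewrite -[x]setCK E setC0.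
have HcT : ~: x != setT.
  apply: contra H0 => /eqP E; by rewrite -[x]setCK E setCT.
by split => //; apply: hk.
Qed.

Lemma Zstar_of_valid n (k : {set 'I_n} -> nat) x i : kpos k -> bvalid k (Mid x i) ->
  Zstar k (Mid x i).
Proof.
move=> hk Hv; split => //; split => //.
exists (Mid (~: x) 0); split; first exact: validC Hv.
split => //; apply/mz_disj => //; first by case: Hv.
exact: setICr.
Qed.

Lemma adjM n (k : {set 'I_n} -> nat) x i y j : kpos k -> bvalid k (Mid x i) ->
  bvalid k (Mid y j) -> Mid x i <> Mid y j -> x :&: y != set0 ->
  Gc_adj k (Mid x i) (Mid y j).
Proof.
move=> hk Hx Hy ne Hne; split; first exact: Zstar_of_valid.
split; first exact: Zstar_of_valid.
split => // H; case: Hx => _ HxT _; move/(mz_disj i y j hk HxT): H => E; by rewrite E eqxx in Hne.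
Qed.

Lemma adj_inv n (k : {set 'I_n} -> nat) x i w : kpos k -> Gc_adj k (Mid x i) w ->
  exists z l, w = Mid z l /\ bvalid k (Mid z l) /\ x :&: z != set0 /\ Mid x i <> w.
Proof.
move=> hk [Zu [Zw [ne nmz]]].
case: (Zstar_Mid Zw) => z [l [Ew Hv]]; subst w.
exists z, l; split => //; split => //; split => //.
apply/negP => /eqP E; apply: nmz; apply/mz_disj => //.
by case: Zu => [[_ ? _] _].
Qed.

Lemma walk0_eq V (adj : V -> V -> Prop) u v : walk adj u v 0 -> u = v.
Proof. by inversion 1. Qed.

Lemma walk1_adj V (adj : V -> V -> Prop) u v : walk adj u v 1 -> adj u v.
Proof. inversion 1; subst. by have <- := walk0_eq H4. Qed.

Lemma dist_le V (adj : V -> V -> Prop) u v m p : is_dist adj u v m -> walk adj u v p -> m <= p.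
Proof. by move=> [_ H] W; apply: H. Qed.

Lemma walk2_disj n (k : {set 'I_n} -> nat) x i y j : kpos k -> 2 < n ->
  bvalid k (Mid x i) -> bvalid k (Mid y j) -> x :&: y = set0 ->
  walk (Gc_adj k) (Mid x i) (Mid y j) 2.
Proof.
move=> hk hn Hx Hy E.
have [a Ha] : exists a, a \in x by apply/set0Pn; case: Hx.
have [b Hb] : exists b, b \in y by apply/set0Pn; case: Hy.
set z := [set a; b].
have Hz0 : z != set0 by apply/set0Pn; exists a; rewrite !inE eqxx.
have HzT : z != setT.
  apply/eqP => Ez; have := cards2 a b; rewrite -/z Ez cardsT card_ord => En.
  by move: hn; rewrite En; case: (a != b).
have Hz : bvalid k (Mid z 0) by split => //; apply: hk.
apply: walkS; first apply: (adjM hk Hx Hz).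
- case=> Exz _; apply: (disj_false _ Hb E); by rewrite Exz !inE eqxx orbT.
- by apply/set0Pn; exists a; rewrite !inE Ha eqxx.
apply: walkS; last exact: walk0.
apply: (adjM hk Hz Hy).
- case=> Ezy _; apply: (disj_false Ha _ E); by rewrite -Ezy !inE eqxx.
- by apply/set0Pn; exists b; rewrite !inE Hb eqxx orbT.
Qed.

Lemma Mid_dec n (x y : {set 'I_n}) i j : Mid x i = Mid y j \/ Mid x i <> Mid y j.
Proof.
case: (eqVneq x y) => [->|nxy]; last by right; case=> E; rewrite E eqxx in nxy.
case: (eqVneq i j) => [->|nij]; first by left.
by right; case=> E; rewrite E eqxx in nij.
Qed.

Lemma walk_le2 n (k : {set 'I_n} -> nat) u v : kpos k -> 2 < n ->
  Zstar k u -> Zstar k v -> exists2 m, m <= 2 & walk (Gc_adj k) u v m.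
Proof.
move=> hk hn Zu Zv.
case: (Zstar_Mid Zu) => x [i [-> Hx]]; case: (Zstar_Mid Zv) => y [j [-> Hy]].
case: (Mid_dec x y i j) => [<-|ne]; first by exists 0 => //; apply: walk0.
case: (eqVneq (x :&: y) set0) => Hd.
  by exists 2 => //; apply: walk2_disj.
exists 1 => //; apply: walkS (walk0 _ _); exact: adjM.
Qed.

Lemma mmd_disj n (k : {set 'I_n} -> nat) x i y j : kpos k -> 2 < n ->
  bvalid k (Mid x i) -> bvalid k (Mid y j) -> x :&: y = set0 ->
  mmd (Gc_adj k) (Mid x i) (Mid y j).
Proof.
move=> hk hn Hx Hy E; exists 2; split; [split|split].
- exact: walk2_disj.
- case=> [|[|m']] W //.
  + have [Exy _] := walk0_eq W; subst y; rewrite setIid in E.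
    by case: Hx; rewrite E eqxx.
  + have [z [l [[<- _] [_ [H _]]]]] := adj_inv hk (walk1_adj W).
    by rewrite E eqxx in H.
- move=> w m' Hw Hd; have [p hp W] := walk_le2 hk hn (Zstar_of_valid hk Hy) Hw.2.1.
  exact: leq_trans (dist_le Hd W) hp.
- move=> w m' Hw Hd; have [p hp W] := walk_le2 hk hn (Zstar_of_valid hk Hx) Hw.2.1.
  exact: leq_trans (dist_le Hd W) hp.
Qed.

Lemma nb_same n (k : {set 'I_n} -> nat) x i j w m' : kpos k ->
  bvalid k (Mid x i) -> bvalid k (Mid x j) -> Gc_adj k (Mid x i) w ->
  is_dist (Gc_adj k) (Mid x j) w m' -> m' <= 1.
Proof.
move=> hk Hi Hj Hw Hd.
case: (adj_inv hk Hw) => z [l [Ew [Hz [Hne _]]]]; subst w.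
case: (Mid_dec x z j l) => [E|ne].
  by rewrite -E in Hd; exact: leq_trans (dist_le Hd (walk0 _ _)) _.
apply: (dist_le Hd); apply: walkS (walk0 _ _); exact: adjM.
Qed.

Lemma mmd_same n (k : {set 'I_n} -> nat) x i j : kpos k ->
  bvalid k (Mid x i) -> bvalid k (Mid x j) -> i != j ->
  mmd (Gc_adj k) (Mid x i) (Mid x j).
Proof.
move=> hk Hi Hj ne.
have Hx0 : x :&: x != set0 by rewrite setIid; case: Hi.
exists 1; split; [split|split].
- apply: walkS (walk0 _ _); apply: adjM => //; case=> E; by rewrite E eqxx in ne.
- case=> [|m'] W //; have [E] := walk0_eq W; by rewrite E eqxx in ne.
- by move=> w m' Hw Hd; apply: (nb_same hk Hi Hj Hw Hd).
- by move=> w m' Hw Hd; apply: (nb_same hk Hj Hi Hw Hd).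
Qed.

Lemma SRv n (k : {set 'I_n} -> nat) x i : kpos k -> 2 < n -> bvalid k (Mid x i) ->
  SR_vertex (Zstar k) (Gc_adj k) (Mid x i).
Proof.
move=> hk hn Hx; split; first exact: Zstar_of_valid.
have Hc := validC hk Hx.
exists (Mid (~: x) 0); split; first exact: Zstar_of_valid.
apply: mmd_disj => //; exact: setICr.
Qed.

Lemma SR_disj n (k : {set 'I_n} -> nat) x i y j : kpos k -> 2 < n ->
  bvalid k (Mid x i) -> bvalid k (Mid y j) -> x :&: y = set0 ->
  SR_adj (Zstar k) (Gc_adj k) (Mid x i) (Mid y j).
Proof.
move=> hk hn Hx Hy E; split; first exact: SRv.
split; first exact: SRv.
split; last exact: mmd_disj.
case=> Exy _; subst y; rewrite setIid in E; by case: Hx; rewrite E eqxx.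
Qed.

Lemma SR_same n (k : {set 'I_n} -> nat) x i j : kpos k -> 2 < n ->
  bvalid k (Mid x i) -> bvalid k (Mid x j) -> i != j ->
  SR_adj (Zstar k) (Gc_adj k) (Mid x i) (Mid x j).
Proof.
move=> hk hn Hi Hj ne; split; first exact: SRv.
split; first exact: SRv.
split; last exact: mmd_same.
case=> E; by rewrite E eqxx in ne.
Qed.

Theorem lemma3p18 (n : nat) (k : {set 'I_n} -> nat) :
  3 <= n ->
  (forall x : {set 'I_n}, x != set0 -> x != setT -> 0 < k x) ->
  connected_diam_le (SR_vertex (Zstar k) (Gc_adj k))
                    (SR_adj (Zstar k) (Gc_adj k)) 3.
Proof.
move=> hn hk.
have hk' : kpos k by [].
split.
  case: n k hn hk hk' => [|n] k hn hk hk' //.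
  have H0 : [set ord0 : 'I_n.+1] != set0 by apply/set0Pn; exists ord0; rewrite inE.
  have HT : [set ord0 : 'I_n.+1] != setT.
    apply/eqP => E; have := cards1 (ord0 : 'I_n.+1).
    by rewrite E cardsT card_ord => En; rewrite En in hn.
  exists (Mid [set ord0] 0); apply: SRv => //; split => //; exact: hk.
move=> u v [Zu _] [Zv _].
case: (Zstar_Mid Zu) => x [i [-> Hx]]; case: (Zstar_Mid Zv) => y [j [-> Hy]].
case: (eqVneq (x :&: y) set0) => Hd.
  by exists 1 => //; apply: walkS (walk0 _ _); apply: SR_disj.
case: (eqVneq x y) => Exy.
  subst y; case: (eqVneq i j) => Eij.
    by subst j; exists 0 => //; apply: walk0.
  by exists 1 => //; apply: walkS (walk0 _ _); apply: SR_same.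
have [a Ha] : exists a, a \in x by apply/set0Pn; case: Hx.
case: (eqVneq (x :|: y) setT) => HU.
  exists 3 => //.
  have Cx := validC hk' Hx; have Cy := validC hk' Hy.
  apply: walkS; first apply: (SR_disj hk' hn Hx Cx); first exact: setICr.
  apply: walkS; first apply: (SR_disj hk' hn Cx Cy).
    apply/setP => b; move/setP: HU => /(_ b); rewrite !inE.
    by case: (b \in x); case: (b \in y).
  apply: walkS (walk0 _ _); apply: (SR_disj hk' hn Cy Hy).
  by apply/setP => b; rewrite !inE; case: (b \in y).
set z := ~: (x :|: y).
have Hz0 : z != set0.
  apply: contra HU => /eqP E; by rewrite -[x :|: y]setCK -/z E setC0.
have HzT : z != setT.
  apply/eqP => E; have : a \in z by rewrite E inE.
  by rewrite !inE Ha.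
have Hz : bvalid k (Mid z 0) by split => //; apply: hk.
exists 2 => //.
apply: walkS; first apply: (SR_disj hk' hn Hx Hz).
  by apply/setP => b; rewrite !inE; case: (b \in x).
apply: walkS (walk0 _ _); apply: (SR_disj hk' hn Hz Hy).
by apply/setP => b; rewrite !inE; case: (b \in x); case: (b \in y).
Qed.
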